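(* Let $n\ge1$ and let $\mathcal{D}_{S_1},\mathcal{D}_{S_2}\subseteq\mathcal{D}_{[n]}\setminus\{n\}$ be such that $\mathrm{ICG}(n,\mathcal{D}_{S_1})$ and $\mathrm{ICG}(n,\mathcal{D}_{S_2})$ are isospectral. Let $\mathcal{D}_R\subseteq\mathcal{D}_{[n]}$ be such that $\lambda_d(S_1)=\lambda_d(S_2)$ for all $d\in\mathcal{D}_R$. Let $\mathcal{D}_T\subseteq\mathcal{D}_{[n]}\setminus\mathcal{D}_R$ be such that (1) there is $d_0\in\mathcal{D}_T$ with $\lambda_d(S_1)=\lambda_{d_0}(S_1)$ for all $d\in\mathcal{D}_T$, and (2) $\sum_{d\in\mathcal{D}_T}\phi(n/d)>n-\sum_{d\in\mathcal{D}_R}\phi(n/d)-\sum_{d\in\mathcal{D}_T}\phi(n/d)$. Then there exists $d_0'\in\mathcal{D}_T$ with $\lambda_{d_0'}(S_2)=\lambda_{d_0}(S_1)$. In particular, if $\mathcal{D}_T=\{d_0\}$ then $\lambda_{d_0}(S_1)=\lambda_{d_0}(S_2)$.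
   Context: Identify $\mathbb{Z}_n$ with $[n]=\{1,\dots,n\}$. For a divisor $d$ of $n$, $G_n(d)=\{j\in[n]:\gcd(j,n)=d\}$; $\mathcal{D}_{[n]}$ is the set of positive divisors of $n$. For $\mathcal{D}\subseteq\mathcal{D}_{[n]}\setminus\{n\}$, $\mathrm{ICG}(n,\mathcal{D})=\mathrm{Cay}(\mathbb{Z}_n,S)$ with $S=\bigcup_{d\in\mathcal{D}}G_n(d)$, and $\mathcal{D}=\mathcal{D}_S$. For $k\in[n]$, $\lambda_k(S)=\sum_{g\in S}e^{2\pi\iota kg/n}$; the eigenvalues of $\mathrm{Cay}(\mathbb{Z}_n,S)$ with multiplicity are $\lambda_1(S),\dots,\lambda_n(S)$. $\phi$ is Euler's totient function. Isospectral means having the same multiset of adjacency eigenvalues. *)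

(* Defs.v *)
From mathcomp Require Import all_boot all_order all_algebra.
From mathcomp Require Import complex.
From mathcomp Require Import all_classical all_reals all_analysis.
Set Implicit Arguments. Unset Strict Implicit. Unset Printing Implicit Defensive.
Import GRing.Theory Num.Theory ComplexField.
Local Open Scope ring_scope.
Local Open Scope complex_scope.

Definition expi (R : realType) (x : R) : R[i] := cos x +i* sin x.

(* Z_n identified with [n] = {1,...,n}.  For a set D of divisors of n,
   S_D = union over d in D of G_n(d) = { j in [n] : gcd(j,n) in D }. *)
Definition ICG_conn (n : nat) (D : pred nat) : pred nat :=
  fun j => (0 < j <= n)%N && (gcdn j n \in D).

Definition lam (R : realType) (n : nat) (D : pred nat) (k : nat) : R[i] :=
  \sum_(1 <= g < n.+1 | ICG_conn n D g)
     expi (2 * pi * (k * g)%:R / n%:R).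

(* eigenvalues with multiplicity: lambda_1(S), ..., lambda_n(S) *)
Definition spectrum (R : realType) (n : nat) (D : pred nat) : seq R[i] :=
  [seq lam R n D k | k <- iota 1 n].

Definition isospectral (R : realType) (n : nat) (D1 D2 : pred nat) : bool :=
  perm_eq (spectrum R n D1) (spectrum R n D2).

Definition phisum (n : nat) (D : pred nat) : nat :=
  \sum_(d <- divisors n | d \in D) totient (n %/ d).

(* Main.v *)
Require Import Defs.
From mathcomp Require Import all_boot all_order all_algebra.
From mathcomp Require Import complex.
From mathcomp Require Import all_classical all_reals all_analysis.
From mathcomp Require Import zify ring lra.
Import GRing.Theory Num.Theory ComplexField.
Local Open Scope ring_scope.
Local Open Scope ring_scope.

Lemma lift_unit a m n : (0 < a)%N -> (0 < n)%N -> (m %| n)%N -> coprime a m ->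
  coprime (a + m * partn n (\pi(a)^')) n.
Proof.
move=> a0 n0 mn cam; set t := partn n (\pi(a)^'); set u := (a + m * t)%N.
have t0 : (0 < t)%N by apply: part_gt0.
suff key : forall p, prime p -> (p %| n)%N -> ~~ (p %| u)%N.
  rewrite /coprime; case: (ltngtP (gcdn u n) 1) => // g.
  - by move: g; rewrite ltnS leqn0 => /eqP g0; have := gcdn_gt0 u n; rewrite g0 n0 orbT.
  - have pp := pdiv_prime g; have pg := pdiv_dvd (gcdn u n).
    have := key _ pp (dvdn_trans pg (dvdn_gcdr _ _)).
    by rewrite (dvdn_trans pg (dvdn_gcdl _ _)).
move=> p pp pn; case pa: (p %| a)%N.
- have pm : ~~ (p %| m)%N.
    apply/negP => pm; move: cam; rewrite /coprime => /eqP g1.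
    have : (p %| gcdn a m)%N by rewrite dvdn_gcd pa pm.
    by rewrite g1 dvdn1 => /eqP p1; move: pp; rewrite p1.
  have pt : ~~ (p %| t)%N.
    apply/negP => pt.
    have : p \in \pi(t) by rewrite mem_primes pp t0 pt.
    move/(pnatPpi (part_pnat _ _)); rewrite !inE /=.
    by rewrite mem_primes pp a0 pa.
  by rewrite /u dvdn_addr // Euclid_dvdM // negb_or pm pt.
- have pt : (p %| t)%N.
    move: pn; rewrite -(partnC (\pi(a)^') n0) Euclid_dvdM // => /orP[//|].
    move=> pt'.
    have : p \in \pi(partn n (\pi(a)^'^')) by rewrite mem_primes pp part_gt0 pt'.
    move/(pnatPpi (part_pnat _ _)); rewrite !inE /=.
    by rewrite mem_primes pp a0 pa.
  by rewrite /u dvdn_addl ?pa // dvdn_mull.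
Qed.

Lemma unit_lift k n : (0 < k)%N -> (0 < n)%N ->
  exists u, coprime u n /\ (u * gcdn k n = k %[mod n])%N.
Proof.
move=> k0 n0; set d := gcdn k n.
have d0 : (0 < d)%N by rewrite gcdn_gt0 k0.
set a := (k %/ d)%N; set m := (n %/ d)%N.
have ka : k = (a * d)%N by rewrite divnK // dvdn_gcdl.
have nm : n = (m * d)%N by rewrite divnK // dvdn_gcdr.
have a0 : (0 < a)%N by move: k0; rewrite ka muln_gt0 => /andP[].
have cam : coprime a m.
  rewrite /coprime; apply/eqP; apply/eqP; rewrite -(eqn_pmul2r d0) muln_gcdl -ka -nm mul1n.
  by [].
have mn : (m %| n)%N by rewrite nm dvdn_mulr.
exists (a + m * partn n (\pi(a)^'))%N; split; first exact: lift_unit.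
rewrite mulnDl -ka -mulnA mulnCA -nm.
by rewrite addnC modnMDl.
Qed.
Local Open Scope ring_scope.

Definition ee (R : realType) (n x : nat) : R[i] := expi (2 * pi * x%:R / n%:R).

Lemma ee_mod (R : realType) n x : (0 < n)%N -> ee R n x = ee R n (x %% n).
Proof.
move=> n0; rewrite {1}(divn_eq x n) /ee /expi.
set q := (x %/ n)%N; set r := (x %% n)%N.
have nz : (n%:R : R) != 0 by rewrite pnatr_eq0 -lt0n.
have -> : 2 * pi * (q * n + r)%:R / n%:R = 2 * pi * r%:R / n%:R + (pi *+ 2) *+ q :> R.
  rewrite -mulrnA -mulr_natr natrD !natrM; field => //.
by rewrite (periodicn (@cosD2pi R)) (periodicn (@sinD2pi R)).
Qed.

Lemma lamE (R : realType) n D k : (0 < n)%N ->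
  lam R n D k = \sum_(i < n | gcdn i n \in D) ee R n (k * i).
Proof.
move=> n0; rewrite /lam big_nat_cond.
rewrite (eq_bigl (fun g => (1 <= g < n.+1)%N && (gcdn g n \in D))); last first.
  move=> g /=; rewrite /ICG_conn ltnS.
  by case: (1 <= g <= n)%N.
rewrite -big_nat_cond -(big_mkord (fun i => gcdn i n \in D) (fun i => ee R n (k * i))).
rewrite big_mkcond [RHS]big_mkcond /=.
rewrite big_nat_recr // [RHS]big_ltn //=.
rewrite addrC; congr (_ + _).
rewrite gcdnn gcd0n /ee -/(ee R n (k * n)) -/(ee R n (k * 0)) ee_mod // modnMl muln0.
by [].
Qed.

Lemma lam_unit (R : realType) n D k d u : (0 < n)%N -> coprime u n ->
  (u * d = k %[mod n])%N -> lam R n D k = lam R n D d.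
Proof.
move=> n0 cu ek; rewrite !lamE //.
pose h (i : 'I_n) : 'I_n := Ordinal (ltn_pmod (u * i) n0).
have hinj : injective h.
  have key : forall i j : 'I_n, (i <= j)%N -> h i = h j -> i = j.
    move=> i j ij /(congr1 val) /= /eqP; rewrite eq_sym eqn_mod_dvd ?leq_mul2l ?ij ?orbT //.
    rewrite -mulnBr Gauss_dvdr; last by rewrite coprime_sym.
    move=> dv; apply: val_inj => /=; apply/eqP; rewrite eqn_leq ij /=.
    have : (j - i < n)%N by apply: leq_ltn_trans (leq_subr _ _) (ltn_ord j).
    move=> lt; have : (j - i == 0)%N.
      by rewrite -leqn0 leqNgt; apply/negP => p; move: (dvdn_leq p dv); rewrite leqNgt lt.
    by rewrite subn_eq0.
  move=> i j hij; case: (leqP i j) => ij; first exact: key.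
  by apply/esym/key => //; apply: ltnW.
rewrite [RHS](reindex_inj hinj) /=.
apply: eq_big => i /=.
  by rewrite gcdn_modl gcdnC (gcdnC (u * i)) Gauss_gcdr // coprime_sym.
move=> _; rewrite [RHS]ee_mod // [LHS]ee_mod //.
by rewrite [in RHS]modnMmr mulnA (mulnC d u) -[in RHS]modnMml ek modnMml.
Qed.

Lemma lam_gcd (R : realType) n D k : (0 < n)%N -> (0 < k)%N ->
  lam R n D k = lam R n D (gcdn k n).
Proof.
move=> n0 k0; have [u [cu ek]] := unit_lift k n k0 n0.
exact: (lam_unit R n D k (gcdn k n) u n0 cu ek).
Qed.

Local Close Scope ring_scope.

Lemma count_sum T (a : pred T) s : count a s = (\sum_(k <- s) (a k : nat))%N.
Proof. by elim: s => [|x s IH]; rewrite ?big_nil ?big_cons //= IH. Qed.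

Lemma count_gcd_eq n d : (0 < n)%N -> (d %| n)%N ->
  count (fun k => gcdn k n == d) (iota 1 n) = totient (n %/ d).
Proof.
move=> n0 dn.
have d0 : (0 < d)%N.
  rewrite lt0n; apply/negP => /eqP d00; move: dn; rewrite d00 dvd0n => /eqP n00.
  by move: n0; rewrite n00.
set m := (n %/ d)%N.
have nm : n = (m * d)%N by rewrite divnK.
rewrite count_sum.
have -> : (\sum_(k <- iota 1 n) (gcdn k n == d : nat) =
           \sum_(0 <= k < n) (gcdn k n == d : nat))%N.
  have -> : iota 1 n = index_iota 1 n.+1 by rewrite /index_iota subSS subn0.
  rewrite big_nat_recr // [RHS]big_ltn //= gcdnn gcd0n addnC.
  by [].
rewrite totient_count_coprime.
rewrite [in LHS]nm big_nat_mul; apply: eq_bigr => i _.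
rewrite big_ltn; last by rewrite ltn_pmul2r.
rewrite big_nat_cond big1 ?addn0; last first.
  move=> j /andP[/andP[ij ji] _]; apply/eqP; rewrite eqb0; apply/negP => /eqP gj.
  have : (d %| j)%N by rewrite -gj dvdn_gcdl.
  case/dvdnP => q jq; move: ij ji; rewrite jq ltn_pmul2r // ltn_pmul2r //.
  by move=> a b; move: (leq_trans a b); rewrite ltnn.
rewrite /= addn0 -muln_gcdl -{2}(mul1n d) eqn_pmul2r // /coprime gcdnC.
by [].
Qed.

Lemma count_phisum n (D : pred nat) : (0 < n)%N ->
  (forall d, d \in D -> (d %| n)%N) ->
  count (fun k => gcdn k n \in D) (iota 1 n) = phisum n D.
Proof.
move=> n0 Dd; rewrite /phisum.
rewrite (eq_bigr (fun d => count (fun k => gcdn k n == d) (iota 1 n))); last first.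
  by move=> d dD; rewrite count_gcd_eq // Dd.
under eq_bigr do rewrite count_sum.
rewrite exchange_big /= count_sum; apply: eq_bigr => k _.
have gin : gcdn k n \in divisors n by rewrite -dvdn_divisors // dvdn_gcdr.
rewrite big_mkcond /= (bigD1_seq (gcdn k n)) ?divisors_uniq //= eqxx.
rewrite big1 ?addn0; first by case: (gcdn k n \in D).
by move=> d dk; case: (d \in D) => //; rewrite eq_sym (negbTE dk).
Qed.

Lemma sum_le_seq (s : seq nat) (F G : nat -> nat) :
  (forall k, k \in s -> F k <= G k) -> \sum_(k <- s) F k <= \sum_(k <- s) G k.
Proof. by move=> h; rewrite big_seq [X in _ <= X]big_seq; apply: leq_sum. Qed.

Local Open Scope ring_scope.

Theorem lemma3p16 (R : realType) (n : nat) (D1 D2 DR DT : pred nat) (d0 : nat) :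
  (1 <= n)%N ->
  (forall d, d \in D1 -> (d %| n)%N && (d != n)) ->
  (forall d, d \in D2 -> (d %| n)%N && (d != n)) ->
  isospectral R n D1 D2 ->
  (forall d, d \in DR -> (d %| n)%N) ->
  (forall d, d \in DR -> lam R n D1 d = lam R n D2 d) ->
  (forall d, d \in DT -> (d %| n)%N && (d \notin DR)) ->
  d0 \in DT ->
  (forall d, d \in DT -> lam R n D1 d = lam R n D1 d0) ->
  ((n%:Z - (phisum n DR)%:Z - (phisum n DT)%:Z) < (phisum n DT)%:Z)%R ->
  (exists2 d0', d0' \in DT & lam R n D2 d0' = lam R n D1 d0)
  /\ ((forall d, (d \in DT) = (d == d0)) -> lam R n D1 d0 = lam R n D2 d0).
Proof.
move=> n0 D1d D2d iso DRd DReq DTd d0T DTeq ineq.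
set v := lam R n D1 d0.
have part1 : exists2 d0', d0' \in DT & lam R n D2 d0' = v.
  case: (boolP (has (fun d => (d \in DT) && (lam R n D2 d == v)) (divisors n))).
    by case/hasP => d _ /andP[dT /eqP e]; exists d.
  move=> nh; exfalso.
  set s := iota 1 n.
  pose PR := fun k => gcdn k n \in DR.
  pose PT := fun k => gcdn k n \in DT.
  pose c1 := fun k => lam R n D1 k == v.
  pose c2 := fun k => lam R n D2 k == v.
  have hc : count c1 s = count c2 s.
    by move/permP: iso => /(_ (pred1 v)); rewrite /spectrum !count_map.
  have DTd' : forall d, d \in DT -> (d %| n)%N by move=> d /DTd /andP[].
  have hR := count_phisum n DR n0 DRd.
  have hT := count_phisum n DT n0 DTd'.
  have gdiv : forall k, gcdn k n \in divisors n by move=> k; rewrite -dvdn_divisors // dvdn_gcdr.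
  have ks : forall k, k \in s -> (0 < k)%N by move=> k; rewrite mem_iota => /andP[].
  have f1 : forall k, PT k -> ~~ PR k by move=> k /DTd /andP[].
  have f2 : forall k, k \in s -> PT k -> c1 k.
    by move=> k /ks k0 pt; rewrite /c1 lam_gcd // DTeq.
  have f3 : forall k, k \in s -> PR k -> c1 k = c2 k.
    by move=> k /ks k0 pr; rewrite /c1 /c2 !(lam_gcd R n _ k) // DReq.
  have f4 : forall k, k \in s -> PT k -> ~~ c2 k.
    move=> k /ks k0 pt; apply/negP; rewrite /c2 (lam_gcd R n _ k) // => e.
    move/negP: nh; apply; apply/hasP; exists (gcdn k n); first exact: gdiv.
    by apply/andP; split.
  have A : (count PT s + count (predI PR c1) s <= count c1 s)%N.
    rewrite !count_sum -big_split /=; apply: sum_le_seq => k ks'.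
    case pt: (PT k); last by case: (PR k); case: (c1 k).
    by rewrite (negbTE (f1 _ pt)) f2.
  have B : (count c2 s <= count (predI PR c1) s + count (predI (predC PR) (predC PT)) s)%N.
    rewrite !count_sum -big_split /=; apply: sum_le_seq => k ks'.
    case pr: (PR k); first by rewrite f3 //=; case: (c2 k).
    case pt: (PT k); first by rewrite (negbTE (f4 _ ks' pt)).
    by case: (c2 k).
  have C : (count PR s + count PT s + count (predI (predC PR) (predC PT)) s = n)%N.
    rewrite !count_sum -!big_split /=.
    rewrite -[in RHS](size_iota 1 n) -/s -sum1_size; apply: eq_bigr => k _.
    case pr: (PR k); case pt: (PT k) => //.
    by move: (f1 _ pt); rewrite pr.
  rewrite hR hT in A B C.
  move: ineq; lia.
split; first by [].
move=> DTe; case: part1 => d' d'T e; move: d'T; rewrite DTe => /eqP de.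
by rewrite -e de.
Qed.
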